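(* Let $f\in\mathbb{Q}[x]$ be a univariate numerical polynomial of degree $n$. Then \[ \frac{\gcd\{kf(k)\mid k\in\mathbb{Z}\}}{\gcd\{f(k)\mid k\in\mathbb{Z}\}} \] divides $\operatorname{lcm}\{1,\ldots,n+1\}$.
   Context: A numerical polynomial is a polynomial with rational coefficients taking integer values at all integers. *)

(* Defs.v *)
From HB Require Import structures.
From mathcomp Require Import all_boot all_order all_algebra.
Set Implicit Arguments. Unset Strict Implicit. Unset Printing Implicit Defensive.
Import Order.TTheory GRing.Theory Num.Theory.
Local Open Scope ring_scope.

Definition numerical (f : {poly rat}) : Prop :=
  forall k : int, f.[k%:~R] \is a Num.int.

Definition is_gcd_set (S : int -> Prop) (g : int) : Prop :=
  0 <= g /\ (forall m, S m -> (g %| m)%Z) /\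
  (forall d : int, (forall m, S m -> (d %| m)%Z) -> (d %| g)%Z).

Definition lcm_upto (N : nat) : nat := \big[lcmn/1%N]_(1 <= i < N.+1) i.

(* Main.v *)
Require Import Defs.
From HB Require Import structures.
From mathcomp Require Import all_boot all_order all_algebra.
From mathcomp Require Import ring lra zify.
Import Order.TTheory GRing.Theory Num.Theory.
Local Open Scope ring_scope.

Section S.
Variable M : rat -> Prop.
Hypothesis M0 : M 0.
Hypothesis MD : forall x y, M x -> M y -> M (x + y).
Hypothesis MN : forall x, M x -> M (- x).

Lemma size_diff (p : {poly rat}) N : (size p <= N.+1)%N ->
  (size (p \Po ('X + 1) - p)%R <= N)%N.
Proof.
move=> sp.
have s2 : size ('X + 1 : {poly rat}) = 2 by rewrite size_XaddC.
have sc := size_comp_poly2 p s2.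
apply/leq_sizeP => j Nj; rewrite coefB.
have [jN|] := ltnP N j.
  by rewrite !nth_default ?subr0 // ?sc (leq_trans sp).
rewrite leq_eqVlt ltnNge Nj orbF => /eqP jE; subst j.
have [spN|spN] := eqVneq (size p) N.+1.
  have s1 : (1 < size ('X + 1 : {poly rat})%R)%N by rewrite s2.
  have := lead_coef_comp p s1.
  rewrite -/(lead_coef _).
  have -> : lead_coef ('X + 1 : {poly rat}) = 1 by rewrite lead_coefXaddC.
  rewrite expr1n mulr1 !lead_coefE sc spN /= => ->; by rewrite subrr.
have sp' : (size p <= N)%N by rewrite leq_eqVlt (negPf spN) /= in sp.
by rewrite !nth_default ?subr0 // sc.
Qed.

Lemma ext_vals N : forall (p : {poly rat}) (a : int), (size p <= N)%N ->
  (forall t : nat, (t < N)%N -> M p.[(a + t%:Z)%:~R]) -> forall k : int, M p.[k%:~R].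
Proof.
elim: N => [|N IH] p a sp H k.
  by move: sp; rewrite size_poly_leq0 => /eqP ->; rewrite horner0.
set q := p \Po ('X + 1) - p.
have qE x : q.[x] = p.[x + 1] - p.[x].
  by rewrite /q hornerD hornerN horner_comp hornerD hornerX hornerC.
have Hq : forall k, M q.[k%:~R].
  apply: (IH q a (size_diff _ _ sp)) => t tN.
  rewrite qE; apply: MD; last by apply: MN; apply: H; rewrite ltnS ltnW.
  have -> : (a + t%:Z)%:~R + 1 = (a + t.+1%:Z)%:~R :> rat.
    by rewrite -[(t.+1)%N]addn1 PoszD addrA [RHS]intrD.
  exact: H.
have Ha : M p.[a%:~R] by have := H 0%N isT; rewrite addr0.
have Hm : forall m : nat, M p.[(a + m%:Z)%:~R] /\ M p.[(a - m%:Z)%:~R].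
  elim=> [|m [IH1 IH2]]; first by rewrite !addr0 ?subr0; split.
  have zS (z : int) : (z + 1)%:~R = z%:~R + 1 :> rat by rewrite intrD.
  split.
    have -> : a + m.+1%:Z = (a + m%:Z) + 1 by rewrite intS; ring.
    have := MD _ _ IH1 (Hq (a + m%:Z)); rewrite qE addrCA subrr addr0.
    by rewrite zS.
  have := MD _ _ IH2 (MN _ (Hq (a - m.+1%:Z))); rewrite qE.
  have -> : a - m%:Z = (a - m.+1%:Z) + 1 by rewrite intS; ring.
  by rewrite zS opprB addrCA subrr addr0.
case Hk: (k - a) => [m|m].
  have -> : k = a + m%:Z by rewrite -Hk addrC subrK.
  by case: (Hm m).
have -> : k = a - m.+1%:Z by rewrite -NegzE -Hk addrC subrK.
by case: (Hm m.+1).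
Qed.
End S.

Lemma lcm_upto_dvd N i : (0 < i <= N)%N -> (i %| lcm_upto N)%N.
Proof.
elim: N => [|N IH] /andP[i0 iN]; first by case: i i0 iN.
rewrite /lcm_upto big_nat_recr //=.
case: (ltnP i N.+1) => h.
  by apply: dvdn_trans (IH _) (dvdn_lcml _ _); rewrite i0 -ltnS.
have -> : i = N.+1 by apply/eqP; rewrite eqn_leq iN h.
exact: dvdn_lcmr.
Qed.

Lemma lcm_upto_gt0 N : (0 < lcm_upto N)%N.
Proof.
elim: N => [|N IH]; first by rewrite /lcm_upto big_geq.
by rewrite /lcm_upto big_nat_recr // lcmn_gt0 IH.
Qed.

Lemma final_arith (g1 g2 : int) (L : nat) (S1 : int -> Prop) :
  is_gcd_set S1 g1 -> g1 != 0 -> (g1 %| g2)%Z ->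
  (forall m, S1 m -> (g2 %| L%:Z * m)%Z) -> (0 < L)%N ->
  exists d : int, g2 = d * g1 /\ (d %| L%:Z)%Z.
Proof.
move=> [g1ge0 [H1 H2]] g1n0 g12 HL L0.
case/dvdzP: g12 => d Eg2; subst g2.
exists d; split => //.
set e := gcdz (d * g1) L%:Z.
have Ln0 : L%:Z != 0 by lia.
have en0 : e != 0 by rewrite gcdz_eq0 negb_and Ln0 orbT.
have e0 : 0 <= e by [].
set d0 := ((d * g1) %/ e)%Z.
set l0 := (L%:Z %/ e)%Z.
have Eg : d0 * e = d * g1 by rewrite divzK // dvdz_gcdl.
have EL : l0 * e = L%:Z by rewrite divzK // dvdz_gcdr.
have cop : coprimez d0 l0.
  rewrite /coprimez; apply/eqP.
  have := mulz_gcdl d0 l0 e; rewrite Eg EL -/e.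
  have -> : `|e|%:Z = e by rewrite gez0_abs.
  by move/(congr1 (fun x => (x %/ e)%Z)); rewrite divzz en0 mulzK.
have Hd0 : forall m, S1 m -> (d0 %| m)%Z.
  move=> m Sm; have := HL m Sm.
  rewrite -Eg -EL -mulrA [e * m]mulrC mulrA dvdz_mul2r //.
  by rewrite Gauss_dvdzr.
have d0g1 := H2 d0 Hd0.
rewrite -(@dvdz_mul2r g1 d L%:Z g1n0) -Eg.
have -> : L%:Z * g1 = g1 * L%:Z by rewrite mulrC.
apply: dvdz_mul => //; rewrite -EL; exact: dvdz_mull (dvdzz _).
Qed.

Theorem lemma3p8 (f : {poly rat}) (n : nat) (g1 g2 : int) :
  numerical f -> size f = n.+1 ->
  is_gcd_set (fun m : int => exists k : int, f.[k%:~R] = m%:~R) g1 ->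
  is_gcd_set (fun m : int => exists k : int, k%:~R * f.[k%:~R] = m%:~R) g2 ->
  exists d : int, g2 = d * g1 /\ (d %| (lcm_upto n.+1)%:Z)%Z.
Proof.
move=> numf sf G1 G2.
have fint k : exists w : int, f.[k%:~R] = w%:~R by apply/intrP; exact: numf.
have G1' := G1; have G2' := G2.
case: G1' => [_ [G1a G1b]]; case: G2' => [_ [G2a G2b]].
set L := lcm_upto n.+1.
eapply (@final_arith g1 g2 L); [exact: G1| | | |exact: lcm_upto_gt0].
- apply/eqP => g10.
  have allz : forall k : int, f.[k%:~R] = 0.
    move=> k; have [w fw] := fint k.
    have := G1a w (ex_intro _ k fw); rewrite g10 dvd0z => /eqP w0.
    by rewrite fw w0.
  have fn0 : f != 0 by rewrite -size_poly_eq0 sf.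
  set rs := [seq (i%:R : rat) | i <- iota 0 n.+1].
  have Hall : all (root f) rs.
    apply/allP => x /mapP [i _ ->]; apply/rootP.
    by have := allz i%:Z; rewrite pmulrn.
  have Hu : uniq rs.
    rewrite map_inj_uniq ?iota_uniq //.
    by move=> i j /eqP; rewrite eqr_nat => /eqP.
  have := max_poly_roots fn0 Hall Hu.
  by rewrite size_map size_iota sf ltnn.
- apply: G2b => m [k Hk].
  have [w fw] := fint k.
  have -> : m = k * w by apply: (@intr_inj rat); rewrite -Hk fw intrM.
  by apply: dvdz_mull; apply: G1a; exists k.
- move=> m [k Hk].
  pose Mp := fun x : rat => exists z : int, x = z%:~R /\ (g2 %| z)%Z.
  have M0 : Mp 0 by exists 0; rewrite dvdz0.
  have MD : forall x y, Mp x -> Mp y -> Mp (x + y).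
    by move=> x y [z1 [-> h1]] [z2 [-> h2]]; exists (z1 + z2); rewrite intrD rpredD.
  have MN : forall x, Mp x -> Mp (- x).
    by move=> x [z [-> h]]; exists (- z); rewrite intrN rpredN.
  pose p := (L%:R : rat) *: f.
  have pE x : p.[x] = L%:R * f.[x] by rewrite hornerZ.
  have sp : (size p <= n.+1)%N by rewrite -sf size_scale_leq.
  have := @ext_vals Mp M0 MD MN n.+1 p 1 sp.
  have Hv : forall t : nat, (t < n.+1)%N -> Mp p.[(1 + t%:Z)%:~R].
    move=> t tn; rewrite pE.
    have [w fw] := fint (1 + t%:Z).
    have g2d : (g2 %| (1 + t%:Z) * w)%Z.
      by apply: G2a; exists (1 + t%:Z); rewrite fw intrM.
    have tL : (t.+1 %| L)%N by apply: lcm_upto_dvd; rewrite ltnS.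
    exists ((L %/ t.+1)%N%:Z * ((1 + t%:Z) * w)); split; last exact: dvdz_mull.
    rewrite fw mulrA -intS -PoszM divnK // intrM.
    by rewrite pmulrn.
  move=> /(_ Hv k) [z [Hz g2z]].
  suff -> : L%:Z * m = z by [].
  apply: (@intr_inj rat); rewrite -Hz pE Hk intrM.
  by rewrite pmulrn.
Qed.
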